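(* Let $q$ be a prime power, $t\ge1$, $F=\mathbb{F}_{q^t}$, $A\subseteq F$ with $|A|=n\le q^t$, and let $k$ satisfy $r=n-k\ge q^s$ for some integer $s<t$. Let $W=\{0,w_1,\dots,w_{q^s-1}\}$ be an $\mathbb{F}_q$-subspace of $F$ of dimension $s$, let $\alpha^*\in A$, let $\{\beta_1,\dots,\beta_t\}$ be an arbitrary $\mathbb{F}_q$-basis of $F$, and set \[ g_i(x)=\beta_i\prod_{j=1}^{q^s-1}\Big(x-\big(\alpha^*-w_j^{-1}\beta_i\big)\Big),\quad i=1,\dots,t. \] Then the check polynomials $g_1,\dots,g_t$ yield a linear repair scheme over $\mathbb{F}_q$ for the codeword symbol $f(\alpha^* )$ of the Reed-Solomon code $\mathrm{RS}(A,k)$ with repair bandwidth at most $(n-1)(t-s)\log_2 q$ bits. Moreover, when $n=|F|=q^t$ and $r=q^s$, this repair bandwidth is optimal among linear repair schemes over $\mathbb{F}_q$.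
   Context: $\mathrm{RS}(A,k)=\{(f(\alpha))_{\alpha\in A} : f\in F[x],\ \deg f<k\}$, with $f(\alpha)$ stored at node $\alpha$. Every polynomial $g\in F[x]$ of degree at most $r-1$ gives a dual codeword (a check): $\sum_{\alpha\in A}\lambda_\alpha g(\alpha)f(\alpha)=0$ for fixed nonzero multipliers $\lambda_\alpha$. Given checks $g_1,\dots,g_t$ of degree at most $r-1$ with $\mathrm{rank}_{\mathbb{F}_q}\{g_i(\alpha^* )\}_i=t$, one obtains a linear repair scheme over $\mathbb{F}_q$: applying $\mathrm{Tr}_{F/\mathbb{F}_q}$ to the check equations, the replacement node recovers $t$ independent traces of $f(\alpha^* )$ by downloading from each node $\alpha\ne\alpha^*$ exactly $b_\alpha=\mathrm{rank}_{\mathbb{F}_q}\{g_1(\alpha),\dots,g_t(\alpha)\}$ sub-symbols of $\mathbb{F}_q$; the repair bandwidth is $\sum_{\alpha\neq\alpha^*}b_\alpha$ sub-symbols, i.e. $\log_2 q$ times that many bits. In general a linear repair scheme over $\mathbb{F}_q$ is one where each node sends $\mathbb{F}_q$-linear functions of its symbol and $f(\alpha^* )$ is recovered $\mathbb{F}_q$-linearly; its bandwidth is the total amount downloaded. *)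

(* Defs.v *)
From HB Require Import structures.
From mathcomp Require Import all_boot all_order all_algebra all_field.
Set Implicit Arguments. Unset Strict Implicit. Unset Printing Implicit Defensive.
Import GRing.Theory.
Local Open Scope ring_scope.

Section Repair.
Variables (F0 : finFieldType) (L : fieldExtType F0).

(* A download plan: a list of (node, F_q-linear functional applied at that node).
   Each entry is one downloaded sub-symbol of F_q. *)
Definition download (D : seq (L * 'Hom(L, F0^o))) (f : {poly L}) : 'rV[F0]_(size D) :=
  \row_(j < size D) ((nth (0, 0%VF) D j).2 (f.[(nth (0, 0%VF) D j).1]) : F0).

(* Its bandwidth is size D sub-symbols. *)
Definition lin_repair_scheme (A : seq L) (k : nat) (astar : L)
    (D : seq (L * 'Hom(L, F0^o))) (rho : 'Hom('rV[F0]_(size D), L)) : Prop :=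
  (forall p, p \in D -> p.1 \in A /\ p.1 != astar) /\
  (forall f : {poly L}, (size f <= k)%N -> rho (download D f) = f.[astar]).

Definition check_poly (ws : seq L) (astar beta : L) : {poly L} :=
  beta *: \prod_(w <- ws) ('X - (astar - w^-1 * beta)%:P).

Definition node_bw (gs : seq {poly L}) (alpha : L) : nat :=
  \dim <<[seq g.[alpha] | g <- gs]>>%VS.

End Repair.

(* Main.v *)
Require Import Defs.
From HB Require Import structures.
From mathcomp Require Import all_boot all_order all_algebra all_field zify ring.
Import GRing.Theory.
Set Implicit Arguments. Unset Strict Implicit. Unset Printing Implicit Defensive.
Local Open Scope ring_scope.
Section Frob.
Variables (F0 : finFieldType) (L : fieldExtType F0).

Lemma pnat_cardq m : ([pchar L]).-nat (#|F0| ^ m)%N.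
Proof.
have [p pr pch] := finPcharP F0.
have pchL : p \in [pchar L] by apply: (rmorph_pchar (in_alg L)).
have := card_pprimeChar pch.
set e := logn _ _ => /= He.
have -> : #|F0| = (p ^ e)%N by exact: He.
by rewrite -expnM pnatX pnatE // pchL.
Qed.

Lemma frobD m (x y : L) : (x + y) ^+ (#|F0| ^ m)%N = x ^+ (#|F0| ^ m)%N + y ^+ (#|F0| ^ m)%N.
Proof. exact: exprDn_pchar (pnat_cardq m). Qed.

Lemma frobF m (a : F0) : a ^+ (#|F0| ^ m)%N = a.
Proof.
elim: m => [|m IH]; first by rewrite expr1.
by rewrite expnSr exprM expf_card IH.
Qed.

Lemma frobZ m (a : F0) (x : L) : (a *: x) ^+ (#|F0| ^ m)%N = a *: x ^+ (#|F0| ^ m)%N.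
Proof.
have e : (a%:A : L) ^+ (#|F0| ^ m)%N = a%:A.
  by rewrite -(rmorphXn (in_alg L)) /= frobF.
by rewrite -[a *: x]mulr_algl exprMn e mulr_algl.
Qed.
End Frob.


Lemma prod_cst (R : comNzRingType) (T : Type) (r : seq T) (x : R) :
  \prod_(i <- r) x = x ^+ size r.
Proof. by elim: r => [|a r IH]; rewrite ?big_nil ?expr0 // big_cons IH exprS. Qed.

Section SubPoly.
Variables (F0 : finFieldType) (L : fieldExtType F0) (W : {vspace L}) (Ws : seq L).
Hypothesis Ws_uniq : uniq Ws.
Hypothesis Ws_mem : forall x, (x \in Ws) = (x \in W).
Hypothesis Ws_size : size Ws = (#|F0| ^ \dim W)%N.

Definition Psub (d x : L) := \prod_(w <- Ws) (x + d * w).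

Lemma perm_shift c : c \in W -> perm_eq [seq w + c | w <- Ws] Ws.
Proof.
move=> cW; apply: uniq_perm => //; first by rewrite map_inj_uniq // => x y /addIr.
move=> x; rewrite Ws_mem; apply/mapP/idP => [[w]|xW].
  by rewrite Ws_mem => wW ->; rewrite rpredD.
by exists (x - c); rewrite ?subrK // Ws_mem rpredB.
Qed.

Lemma perm_scale (a : F0) : a != 0 -> perm_eq [seq a *: w | w <- Ws] Ws.
Proof.
move=> a0; apply: uniq_perm => //.
  by rewrite map_inj_uniq // => x y /(canLR (scalerK a0)); rewrite scalerK.
move=> x; rewrite Ws_mem; apply/mapP/idP => [[w]|xW].
  by rewrite Ws_mem => wW ->; rewrite rpredZ.
by exists (a^-1 *: x); rewrite ?scalerK ?scalerKV // Ws_mem rpredZ.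
Qed.

Lemma Psub_shift d c x : c \in W -> Psub d (x + d * c) = Psub d x.
Proof.
move=> cW; rewrite /Psub [RHS](perm_big [seq w + c | w <- Ws]); last by rewrite perm_sym; apply: perm_shift.
rewrite big_map.
by apply: eq_bigr => w _; rewrite mulrDr addrA -(addrA x) [d * c + _]addrC addrA.
Qed.

Lemma zero_Ws : 0 \in Ws.
Proof. by rewrite Ws_mem mem0v. Qed.

Lemma Psub0 d : Psub d 0 = 0.
Proof.
by rewrite /Psub (bigD1_seq 0) ?zero_Ws //= mulr0 addr0 mul0r.
Qed.

Lemma Psub_ker d c : c \in W -> Psub d (d * c) = 0.
Proof. by move=> cW; rewrite -[d * c]add0r Psub_shift // Psub0. Qed.

Definition Ppoly d y : {poly L} := \prod_(w <- Ws) ('X - (- (y + d * w))%:P).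

Lemma Ppoly_horner d y x : (Ppoly d y).[x] = Psub d (x + y).
Proof.
rewrite /Ppoly horner_prod; apply: eq_bigr => w _.
by rewrite hornerXsubC opprK addrA.
Qed.

Lemma Ppoly_size d y : size (Ppoly d y) = (size Ws).+1.
Proof. by rewrite size_prod_XsubC. Qed.

Lemma Ppoly_coef d y j : (size Ws <= j)%N ->
  (Ppoly d y)`_j = (j == size Ws)%:R.
Proof.
move=> hj; have m : Ppoly d y \is monic by apply: monic_prod_XsubC.
case: eqP => [->|ne].
  by move/monicP: m; rewrite lead_coefE Ppoly_size.
apply: nth_default; rewrite Ppoly_size ltn_neqAle hj andbT eq_sym.
by apply/eqP.
Qed.

Lemma Psub_d0 x : Psub 0 x = x ^+ (#|F0| ^ \dim W)%N.
Proof.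
rewrite /Psub (eq_bigr (fun=> x)) => [|w _]; last by rewrite mul0r addr0.
by rewrite prod_cst Ws_size.
Qed.

Lemma Psub_add d x y : Psub d (x + y) = Psub d x + Psub d y.
Proof.
have [->|d0] := eqVneq d 0.
  by rewrite !Psub_d0 frobD.
pose Q := Ppoly d y - Ppoly d 0 - (Psub d y)%:P.
have HQ z : Q.[z] = Psub d (z + y) - Psub d z - Psub d y.
  by rewrite /Q !hornerE !Ppoly_horner addr0.
have sQ : (size Q <= size Ws)%N.
  apply/leq_sizeP => j hj; rewrite /Q !coefB !Ppoly_coef // subrr coefC.
  have hj0 : (0 < j)%N.
    by apply: leq_trans hj; move: zero_Ws; case: (Ws).
  by rewrite (gtn_eqF hj0) subr0.
suff QQ : Q = 0.
  move: (HQ x); rewrite QQ horner0 => /esym/eqP.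
  by rewrite -addrA -opprD subr_eq0 => /eqP.
apply/eqP; apply/negPn/negP => Q0.
have hall : all (root Q) [seq d * w | w <- Ws].
  apply/allP => z /mapP [w]; rewrite Ws_mem => wW ->.
  by rewrite /root HQ Psub_ker // (addrC (d * w)) Psub_shift // subr0 subrr.
have hu : uniq [seq d * w | w <- Ws].
  by rewrite map_inj_uniq ?Ws_uniq // => a b /(mulfI d0).
have := max_poly_roots Q0 hall hu.
by rewrite size_map ltnNge sQ.
Qed.

Lemma Psub_scale d (a : F0) x : Psub d (a *: x) = a *: Psub d x.
Proof.
have [->|a0] := eqVneq a 0; first by rewrite !scale0r Psub0.
rewrite /Psub [in RHS](perm_big [seq a^-1 *: w | w <- Ws]); last by rewrite perm_sym; apply: perm_scale; rewrite invr_eq0.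
rewrite big_map.
have e : forall w, a *: x + d * w = a%:A * (x + d * (a^-1 *: w)).
  move=> w; rewrite mulrDr mulr_algl; congr (_ + _).
  by rewrite mulrCA mulr_algl scalerA divff // scale1r.
rewrite (eq_bigr _ (fun w _ => e w)) big_split /= prod_cst Ws_size.
by rewrite -(rmorphXn (in_alg L)) /= frobF mulr_algl.
Qed.

Lemma Psub_lin d : linear (Psub d).
Proof. by move=> a x y; rewrite Psub_add Psub_scale. Qed.
End SubPoly.


Section MkLin.
Variables (K : fieldType) (aT rT : vectType K) (f : aT -> rT).
Definition mkfun := f.
Definition mklin (fL : linear f) : 'Hom(aT, rT) := linfun mkfun.
Section Inst.
Variable fL : linear f.
HB.instance Definition _ := GRing.isSemilinear.Build K aT rT _ mkfun
  (GRing.semilinear_linear fL).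
Lemma mklinE u : mklin fL u = f u. Proof. by rewrite /mklin lfunE. Qed.
End Inst.
End MkLin.
Arguments mklin {K aT rT f} fL.
Arguments mklinE {K aT rT f} fL u.

Lemma factor_lin (K : fieldType) (U V W : vectType K) (f : 'Hom(U, V)) (g : 'Hom(U, W)) :
  (forall u, f u = 0 -> g u = 0) -> exists h : 'Hom(V, W), forall u, h (f u) = g u.
Proof.
move=> H; exists (g \o f^-1)%VF => u; rewrite comp_lfunE.
have e : f (f^-1%VF (f u)) = f u by rewrite limg_lfunVK // memv_img ?memvf.
have : f (f^-1%VF (f u) - u) = 0 by rewrite linearB /= e subrr.
by move/H; rewrite linearB /= => /eqP; rewrite subr_eq0 => /eqP.
Qed.


Section Checks.
Variables (F0 : finFieldType) (L : fieldExtType F0) (W : {vspace L}) (ws : seq L) (astar : L).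
Hypothesis ws_uniq : uniq ws.
Hypothesis ws_mem : forall x, x \in ws <-> x \in W /\ x != 0.

Let Ws := 0 :: ws.

Lemma Ws_uniq : uniq Ws.
Proof. by rewrite /= ws_uniq andbT; apply/negP => /ws_mem [_ /eqP]. Qed.

Lemma Ws_mem x : (x \in Ws) = (x \in W).
Proof.
rewrite inE; have [->|x0] /= := eqVneq x 0; first by rewrite mem0v.
by apply/idP/idP => [/ws_mem []|xW] //; apply/ws_mem.
Qed.

Lemma Ws_size : size Ws = (#|F0| ^ \dim W)%N.
Proof.
have := @card_vspace F0 (finvect_type L) _ W => <-.
rewrite -(card_uniqP (Ws_uniq : uniq (Ws : seq (finvect_type L)))).
by apply: eq_card => x; rewrite Ws_mem.
Qed.

Definition cst := \prod_(w <- ws) w^-1.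

Lemma cst_neq0 : cst != 0.
Proof.
by rewrite /cst prodf_seq_neq0; apply/allP => w /ws_mem [_ w0]; rewrite invr_eq0.
Qed.

Lemma check_eval b a :
  (check_poly ws astar b).[a] = cst * Psub Ws (a - astar) b.
Proof.
rewrite /check_poly hornerZ horner_prod /Psub big_cons mulr0 addr0 mulrCA /cst -big_split /=.
congr (_ * _); apply: eq_big_seq => w /ws_mem [_ w0].
rewrite !hornerE mulrDr mulrCA mulVf // mulr1.
by rewrite opprB addrCA.
Qed.

Lemma PL_lin d : linear (fun x => cst * Psub Ws d x).
Proof.
move=> a x y; rewrite (Psub_lin Ws_uniq Ws_mem Ws_size) mulrDr.
by rewrite scalerAr.
Qed.

Definition PL d : 'End(L) := mklin (PL_lin d).

Lemma node_bw_lim (beta : seq L) a : basis_of fullv beta ->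
  node_bw [seq check_poly ws astar b | b <- beta] a = \dim (limg (PL (a - astar))).
Proof.
move=> bb; rewrite /node_bw -map_comp -(span_basis bb) limg_span; congr (\dim <<_>>).
by apply: eq_map => b /=; rewrite mklinE check_eval.
Qed.

Lemma bw_astar : \dim (limg (PL 0)) = \dim {:L}.
Proof.
apply: limg_dim_eq; rewrite capfv; apply/eqP; rewrite -subv0; apply/subvP => x.
rewrite memv_ker mklinE (Psub_d0 Ws_size) mulf_eq0 (negPf cst_neq0) /= expf_eq0 memv0.
by case/andP.
Qed.

Lemma bw_other d : d != 0 -> (\dim (limg (PL d)) <= \dim {:L} - \dim W)%N.
Proof.
move=> d0; have := limg_ker_dim (PL d) fullv; rewrite capfv => <-.
suff : (\dim W <= \dim (lker (PL d)))%N by lia.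
apply: (leq_trans _ (dimvS _ (U := (amull d @: W)%VS))).
  by rewrite limg_dim_eq // (eqP (lker0_amull _)) ?capv0 // unitfE.
apply/subvP => y /memv_imgP [w wW ->]; rewrite lfunE /= memv_ker mklinE.
by rewrite (Psub_ker Ws_uniq Ws_mem) // mulr0.
Qed.

End Checks.

Section Dual.
Variables (K : fieldType) (A : seq K).
Hypothesis A_uniq : uniq A.

Definition lam a := (\prod_(b <- A | b != a) (a - b))^-1.
Definition Pi a : {poly K} := \prod_(b <- A | b != a) ('X - b%:P).

Lemma count_neq a : a \in A -> count (fun b => b != a) A = (size A).-1.
Proof.
move=> aA; have := count_predC (pred1 a) A.
rewrite (count_uniq_mem _ A_uniq) aA => <-.
by rewrite add1n.
Qed.

Lemma Pi_size a : a \in A -> size (Pi a) = size A.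
Proof.
move=> aA; rewrite /Pi -big_filter size_prod_XsubC size_filter count_neq //.
by case: (A) aA.
Qed.

Lemma Pi_self a : a \in A -> lam a * (Pi a).[a] = 1.
Proof.
move=> aA; rewrite /Pi horner_prod /lam.
rewrite [X in _ * X](eq_bigr (fun b => a - b)); last by move=> b _; rewrite !hornerE.
rewrite mulVf //.
rewrite prodf_seq_neq0; apply/allP => b _; apply/implyP => ba.
by rewrite subr_eq0 eq_sym.
Qed.

Lemma Pi_other a c : c \in A -> c != a -> (Pi a).[c] = 0.
Proof.
move=> cA ca; rewrite /Pi -big_filter horner_prod (bigD1_seq c) ?mem_filter ?ca ?filter_uniq //=.
by rewrite !hornerE subrr mul0r.
Qed.

Lemma dual (h : {poly K}) : (size h <= (size A).-1)%N -> \sum_(a <- A) lam a * h.[a] = 0.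
Proof.
move=> sh.
pose H := \sum_(a <- A) (lam a * h.[a]) *: Pi a.
have HH : H = h.
  apply/eqP; rewrite -subr_eq0; apply/negPn/negP => E0.
  have hall : all (root (H - h)) A.
    apply/allP => c cA; rewrite /root /H !hornerE horner_sum.
    rewrite (bigD1_seq c) //= big_seq_cond big1 ?addr0.
      by rewrite hornerZ -mulrA mulrC -mulrA [_ * lam c]mulrC Pi_self ?mulr1 ?subrr.
    by move=> a /andP [aA ac]; rewrite hornerZ Pi_other ?mulr0 // eq_sym.
  have := max_poly_roots E0 hall A_uniq.
  rewrite ltnNge => /negP; apply; apply/leq_sizeP => j hj.
  rewrite coefB coef_sum big_seq big1 ?sub0r.
    by rewrite nth_default ?oppr0 //; apply: leq_trans sh (leq_trans (leq_pred _) hj).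
  by move=> a aA; rewrite coefZ nth_default ?mulr0 // Pi_size.
have : H`_(size A).-1 = h`_(size A).-1 by rewrite HH.
rewrite [RHS]nth_default // coef_sum => e; rewrite -[RHS]e.
rewrite !big_seq; apply: eq_bigr => a aA; rewrite coefZ.
have : Pi a \is monic by rewrite /Pi monic_prod_XsubC.
by move/monicP; rewrite lead_coefE Pi_size // => ->; rewrite mulr1.
Qed.

Lemma lam_neq0 a : a \in A -> lam a != 0.
Proof.
move=> aA; rewrite /lam invr_eq0 prodf_seq_neq0; apply/allP => b _; apply/implyP => ba.
by rewrite subr_eq0 eq_sym.
Qed.
End Dual.


Lemma exists_tau (F0 : finFieldType) (L : fieldExtType F0) :
  exists (tau : 'Hom(L, F0^o)) (y0 : L), tau y0 != 0.
Proof.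
have dpos : (0 < \dim {:L})%N.
  apply: (@leq_trans (\dim <[1 : L]>)); first by rewrite dim_vline oner_neq0.
  exact: dimvS (subvf _).
pose i := Ordinal dpos.
have lin : linear (fun y : L => (coord (vbasis fullv) i y : F0^o)).
  by move=> a x y; rewrite linearP.
exists (mklin lin), (vbasis fullv)`_i; rewrite mklinE.
by rewrite coord_free ?eqxx ?oner_neq0 // (basis_free (vbasisP _)).
Qed.


Section Scheme.
Variables (F0 : finFieldType) (L : fieldExtType F0) (A : seq L) (k : nat) (astar : L)
  (gs : seq {poly L}).
Hypothesis Auniq : uniq A.
Hypothesis astarA : astar \in A.
Hypothesis gsize : forall g, g \in gs -> (size g + k <= size A)%N.
Hypothesis gfull : \dim <<[seq g.[astar] | g <- gs]>> = \dim {:L}.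

Lemma scheme_exists : exists (D : seq (L * 'Hom(L, F0^o)))
   (rho : 'Hom('rV[F0]_(size D), L)),
  lin_repair_scheme A k astar rho /\ size D = (\sum_(a <- A | a != astar) node_bw gs a)%N.
Proof.
have [tau [y0 ty0]] := exists_tau L.
pose A' := [seq a <- A | a != astar].
pose B a := <<[seq g.[a] | g <- gs]>>%VS.
pose phi a b : 'Hom(L, F0^o) := (tau \o amull (lam A a * b))%VF.
pose D := flatten [seq [seq (a, phi a b) | b <- vbasis (B a)] | a <- A'].
have sizeD : size D = (\sum_(a <- A | a != astar) node_bw gs a)%N.
  rewrite size_flatten /shape -map_comp sumnE big_map big_filter.
  by apply: eq_bigr => a _; rewrite /= size_map size_tuple.
have memD p : p \in D -> p.1 \in A'.
  by move=> /flattenP [s /mapP [a aA' ->] /mapP [b bB ->]].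
have Dmem a b : a \in A' -> b \in vbasis (B a) -> (a, phi a b) \in D.
  move=> aA bB; apply/flattenP; exists [seq (a, phi a b) | b <- vbasis (B a)].
    exact: (map_f (fun a => [seq (a, phi a b) | b <- vbasis (B a)])).
  exact: (map_f (fun b => (a, phi a b))).
pose pf (u : {ffun 'I_k -> L}) : {poly L} := \sum_(i < k) u i *: 'X^i.
have pfE u x : (pf u).[x] = \sum_(i < k) u i * x ^+ i.
  by rewrite horner_sum; apply: eq_bigr => i _; rewrite hornerZ hornerXn.
have pfs u : (size (pf u) <= k)%N.
  apply/leq_sizeP => j hj; rewrite coef_sum big1 // => i _.
  by rewrite coefZ coefXn (gtn_eqF (leq_trans (ltn_ord i) hj)) mulr0.
have pfL c u v x : (pf (c *: u + v)).[x] = c *: (pf u).[x] + (pf v).[x].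
  rewrite !pfE scaler_sumr -big_split; apply: eq_bigr => i _.
  by rewrite !ffunE mulrDl scalerAl.
have psi_lin : linear (fun u => download D (pf u)).
  move=> c u v; apply/rowP => j; rewrite !mxE pfL linearP.
  by [].
have psi'_lin : linear (fun u => (pf u).[astar]).
  by move=> c u v; rewrite pfL.
pose Psi := mklin psi_lin; pose Psi' := mklin psi'_lin.
have key u : Psi u = 0 -> Psi' u = 0.
  rewrite !mklinE => H0.
  set f := pf u.
  have sf : (size f <= k)%N by apply: pfs.
  have zD p : p \in D -> p.2 (f.[p.1]) = 0.
    move=> pD; have jlt : (index p D < size D)%N by rewrite index_mem.
    by move: H0 => /rowP /(_ (Ordinal jlt)); rewrite !mxE /= nth_index.
  have zB a y : a \in A' -> y \in B a -> tau (lam A a * (y * f.[a])) = 0.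
    move=> aA yB; pose chi := (tau \o amull (lam A a) \o amulr f.[a])%VF.
    have : (B a <= lker chi)%VS.
      rewrite -[B a](span_basis (vbasisP (B a))); apply/span_subvP => b bB.
      rewrite memv_ker !comp_lfunE !lfunE /=.
      have := zD _ (Dmem a b aA bB); rewrite /= comp_lfunE lfunE /= mulrA => ->.
      by [].
    by move/subvP/(_ y yB); rewrite memv_ker !comp_lfunE !lfunE /= => /eqP.
  have zS : forall y, y \in B astar -> tau (lam A astar * (y * f.[astar])) = 0.
    pose chi := (tau \o amull (lam A astar) \o amulr f.[astar])%VF.
    suff : (B astar <= lker chi)%VS.
      by move/subvP => H y yB; move: (H y yB); rewrite memv_ker !comp_lfunE !lfunE /= => /eqP.
    apply/span_subvP => y /mapP [g gG ->].
    rewrite memv_ker !comp_lfunE !lfunE /=.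
    have sgf : (size (g * f)%R <= (size A).-1)%N.
      apply: (leq_trans (size_mul_leq _ _)); have := gsize gG; lia.
    have := dual Auniq sgf; rewrite (bigD1_seq astar) //= => /eqP; rewrite addr_eq0 => /eqP e.
    rewrite -hornerM e linearN /= linear_sum /= big1_seq ?oppr0 //.
    move=> a /andP [aa aA]; rewrite hornerM; apply: zB.
      by rewrite mem_filter aa.
    exact: memv_span (map_f _ gG).
  have Bfull : B astar = fullv by apply/eqP; rewrite eqEdim subvf gfull /=.
  apply/eqP/negPn/negP => fa0.
  have lam0 := lam_neq0 astarA.
  have := zS (y0 / (lam A astar * f.[astar])); rewrite Bfull memvf => /(_ isT).
  have -> : lam A astar * (y0 / (lam A astar * f.[astar]) * f.[astar]) = y0.
    by field; rewrite lam0 fa0.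
  by move/eqP; rewrite (negPf ty0).
have [rho Hrho] := factor_lin key.
exists D, rho; split => //; split.
  by move=> p /memD; rewrite mem_filter => /andP [].
move=> f sf; pose u := [ffun i : 'I_k => f`_i].
have pfu : pf u = f.
  rewrite /pf (eq_bigr (fun i : 'I_k => f`_i *: 'X^i)) => [|i _]; last by rewrite ffunE.
  rewrite -poly_def; apply/polyP => i; rewrite coef_poly; case: ltnP => h //.
  by rewrite nth_default // (leq_trans sf h).
by have := Hrho u; rewrite !mklinE pfu.
Qed.
End Scheme.

Local Open Scope nat_scope.
Lemma conv1 q s z : (1 <= q)%N ->
  (q ^ s * (q - 1) * z + q * q ^ s <= q * q ^ z + q ^ s * (q - 1) * s)%N.
Proof.
move=> q1; set Y := q ^ s.
have [le|lt] := leqP s z.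
  rewrite -(subnK le); elim: (z - s) => [|m IH]; first by rewrite add0n; lia.
  have h : (Y <= q * q ^ (m + s))%N.
    by rewrite /Y -expnS leq_pexp2l //; lia.
  rewrite addSn expnS.
  nia.
have P m : (m <= s)%N -> (Y * (q - 1) * (s - m) + q * Y <= q * q ^ (s - m) + Y * (q - 1) * s)%N.
  elim: m => [|m IH] hm; first by rewrite subn0; lia.
  have h : (q * q ^ (s - m.+1) <= Y)%N.
    by rewrite -expnS /Y leq_pexp2l //; lia.
  have IH' := IH (ltnW hm).
  have e : (s - m = (s - m.+1).+1)%N by lia.
  rewrite e expnS in IH'.
  nia.
have := P (s - z)%N (leq_subr _ _).
have -> : (s - (s - z) = z)%N by lia.
by [].
Qed.

Lemma conv_sum q s (l : seq nat) : (2 <= q)%N ->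
  (\sum_(z <- l) q ^ z <= size l * q ^ s)%N -> (\sum_(z <- l) z <= size l * s)%N.
Proof.
move=> q2 H.
have H1 : (\sum_(z <- l) (q ^ s * (q - 1) * z + q * q ^ s)
          <= \sum_(z <- l) (q * q ^ z + q ^ s * (q - 1) * s))%N.
  by apply: leq_sum => z _; apply: conv1; lia.
rewrite !big_split /= -!big_distrr /= !big_const_seq !count_predT /= in H1.
rewrite !iter_addn_0 in H1.
have Y0 : (0 < q ^ s * (q - 1))%N by rewrite muln_gt0 expn_gt0; lia.
rewrite -(leq_pmul2l Y0).
set S := (\sum_(z <- l) z)%N in H1 *.
set T := (\sum_(z <- l) q ^ z)%N in H H1.
nia.
Qed.
Local Open Scope ring_scope.


Lemma sum_eq_count (T : eqType) (l : seq T) (x : T) :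
  (\sum_(a <- l) (x == a) = count_mem x l)%N.
Proof. by elim: l => [|b l IH]; rewrite ?big_nil // big_cons IH /= eq_sym. Qed.

Lemma sum_b2n_count (T : Type) (P : pred T) (l : seq T) :
  (\sum_(a <- l) (P a : nat) = count P l)%N.
Proof. by elim: l => [|b l IH]; rewrite ?big_nil // big_cons IH. Qed.

Section Lower.
Variables (F0 : finFieldType) (L : fieldExtType F0) (A : seq L) (k s : nat) (astar : L)
  (D : seq (L * 'Hom(L, F0^o))) (rho : 'Hom('rV[F0]_(size D), L)).
Hypothesis Auniq : uniq A.
Hypothesis astarA : astar \in A.
Hypothesis hn : size A = (#|F0| ^ \dim {:L})%N.
Hypothesis hr : (size A - k)%N = (#|F0| ^ s)%N.
Hypothesis hsch : lin_repair_scheme A k astar rho.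

Let A' := [seq a <- A | a != astar].
Let d0 := ((0 : L), (0 : 'Hom(L, F0^o))).
Let rj (j : 'I_(size D)) := rho (delta_mx 0 j).

Lemma sizeA' : size A' = (size A).-1.
Proof. by rewrite size_filter count_neq. Qed.

Section WithTau.
Variable tau : 'Hom(L, F0^o).

Lemma Llin a : linear (fun th : L =>
  (\row_(j < size D) (if (nth d0 D j).1 == a then tau (th * rj j) else 0)
     : 'rV[F0]_(size D))).
Proof.
move=> c x y; apply/rowP => j; rewrite !mxE; case: ifP => _; last by rewrite mulr0 addr0.
by rewrite mulrDl -scalerAl linearP.
Qed.

Definition Lam a := mklin (Llin a).
Definition zz a := \dim (lker (Lam a)).
Definition ca a := (\sum_(j < size D) ((nth d0 D j).1 == a))%N.

Lemma hz a : (\dim {:L} - zz a <= ca a)%N.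
Proof.
have := limg_ker_dim (Lam a) fullv; rewrite capfv => e.
have -> : (\dim {:L} - zz a = \dim (limg (Lam a)))%N by rewrite -e /zz addKn.
pose S := [seq (delta_mx 0 j : 'rV[F0]_(size D)) | j <- enum [pred j : 'I_(size D) | (nth d0 D j).1 == a]].
have h1 : (limg (Lam a) <= <<S>>)%VS.
  apply/subvP => v /memv_imgP [th _ ->]; rewrite mklinE.
  rewrite (row_sum_delta (\row_j _)); apply: rpred_sum => j _; rewrite mxE.
  case: ifP => cj; last by rewrite scale0r mem0v.
  by apply: rpredZ; apply: memv_span; apply: map_f; rewrite mem_enum inE cj.
apply: leq_trans (dimvS h1) _.
apply: leq_trans (dim_span _) _; rewrite size_map -cardE /ca.
rewrite -sum1_card big_mkcond /=; apply: eq_leq; apply: eq_bigr => j _.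
by rewrite inE; case: (_ == a).
Qed.

Lemma hc : (\sum_(a <- A') ca a <= size D)%N.
Proof.
rewrite /ca exchange_big /=.
apply: (@leq_trans (\sum_(j < size D) 1)%N); last by rewrite sum1_card card_ord.
apply: leq_sum => j _; rewrite sum_eq_count.
by rewrite (count_uniq_mem _ (filter_uniq _ Auniq)) leq_b1.
Qed.

Variable y0 : L.
Hypothesis ty0 : tau y0 != 0.

Lemma hth th : th != 0 ->
  (count (fun a => th \in lker (Lam a)) A' <= #|F0| ^ s - 1)%N.
Proof.
move=> th0; rewrite leqNgt; apply/negP => hcnt.
case: hsch => hD hrec.
pose Ns := [seq a <- A' | th \notin lker (Lam a)].
pose f0 := \prod_(b <- Ns) ('X - b%:P).
have sf0 : (size f0 <= k)%N.
  rewrite size_prod_XsubC size_filter.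
  have ec : (count (fun a => th \notin lker (Lam a)) A' + count (fun a => th \in lker (Lam a)) A' = size A')%N.
    by rewrite addnC; exact: count_predC.
  have sa := sizeA'.
  have q1 : (0 < #|F0| ^ s)%N by rewrite expn_gt0 (ltnW (finNzRing_gt1 F0)).
  lia.
have fa0 : f0.[astar] != 0.
  rewrite horner_prod prodf_seq_neq0; apply/allP => b bN; apply/implyP => _.
  move: bN; rewrite !mem_filter => /andP [_ /andP [ba _]].
  by rewrite !hornerE subr_eq0 eq_sym.
have main : forall lm, tau (th * (lm * f0.[astar])) = 0.
  move=> lm; have := hrec (lm *: f0) (leq_trans (size_scale_leq _ _) sf0).
  rewrite hornerZ => <-.
  set v := download D _.
  rewrite (row_sum_delta v) linear_sum mulr_sumr linear_sum big1 // => j _.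
  rewrite linearZ /= -scalerAr linearZ /=.
  set p := nth d0 D j.
  have pD : p \in D by apply: mem_nth.
  have [pA pa] := hD p pD.
  have pA' : p.1 \in A' by rewrite mem_filter pa pA.
  have [hin|hout] := boolP (th \in lker (Lam p.1)).
    move: hin; rewrite memv_ker mklinE => /eqP /rowP /(_ j); rewrite !mxE eqxx => ->.
    by rewrite scaler0.
  have pN : p.1 \in Ns by rewrite mem_filter hout pA'.
  have f0p : f0.[p.1] = 0.
    rewrite horner_prod (bigD1_seq p.1) //= ?filter_uniq //.
    by rewrite !hornerE subrr mul0r.
  by rewrite /v mxE -/p hornerZ f0p mulr0 linear0 scale0r.
have := main (y0 / (th * f0.[astar])).
have -> : th * (y0 / (th * f0.[astar]) * f0.[astar]) = y0.
  by field; rewrite th0 fa0.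
by move/eqP; rewrite (negPf ty0).
Qed.

Lemma hd : (\sum_(a <- A') (#|F0| ^ zz a - 1) <= (#|F0| ^ \dim {:L} - 1) * (#|F0| ^ s - 1))%N.
Proof.
pose LF := finvect_type L.
have cK a : (#|F0| ^ zz a - 1 = \sum_(x : LF) ((x \in lker (Lam a)) && (x != 0%R)))%N.
  have := @card_vspace F0 LF _ (lker (Lam a)); rewrite /zz => <-.
  rewrite (cardD1 0) mem0v add1n subn1 /= -sum1_card big_mkcond /=.
  by apply: eq_bigr => x _; rewrite !inE andbC; case: (_ && _).
rewrite (eq_bigr _ (fun a _ => cK a)) exchange_big /=.
apply: (@leq_trans (\sum_(x : LF) ((x != 0%R) * (#|F0| ^ s - 1)))%N).
  apply: leq_sum => x _; have [->|x0] := eqVneq x 0.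
    by rewrite big1 // => a _; rewrite andbF.
  rewrite mul1n (eq_bigr (fun a => ((x \in lker (Lam a)) : nat))) => [|a _]; last by rewrite andbT.
  by rewrite sum_b2n_count; apply: hth.
rewrite -big_distrl /=; apply: leq_mul => //.
have -> : (\sum_(x : LF) (x != 0%R) = #|predC1 (0%R : LF)|)%N.
  by rewrite -sum1_card [RHS]big_mkcond /=; apply: eq_bigr => x _; rewrite !inE; case: (_ != _).
have cLF : #|LF| = (#|F0| ^ \dim {:L})%N.
  have := @card_vspace F0 LF _ fullv => <-.
  by apply: eq_card => x; rewrite memvf.
by rewrite cardC1 cLF subn1.
Qed.

End WithTau.

Lemma lower_bound : ((size A - 1) * (\dim {:L} - s) <= size D)%N.
Proof.
have [tau [y0 ty0]] := exists_tau L.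
have q2 := finNzRing_gt1 F0.
set t := \dim {:L}; set q := #|F0|.
have hN : size A' = (q ^ t - 1)%N by rewrite sizeA' hn subn1.
have hd' := hd ty0.
have hsum : (\sum_(z <- map (zz tau) A') q ^ z <= size (map (zz tau) A') * q ^ s)%N.
  rewrite big_map size_map.
  have e1 : (\sum_(a <- A') q ^ zz tau a = \sum_(a <- A') (q ^ zz tau a - 1) + size A')%N.
    rewrite -sum1_size -big_split /=; apply: eq_bigr => a _.
    by rewrite subnK // expn_gt0 (ltnW q2).
  rewrite e1 hN.
  have qs : (1 <= q ^ s)%N by rewrite expn_gt0 (ltnW q2).
  move: hd'; rewrite -/t -/q.
  set S := (\sum_(a <- A') _)%N; set X := (q ^ t - 1)%N; set Y := (q ^ s)%N.
  nia.
have hzs := conv_sum q2 hsum; rewrite big_map size_map in hzs.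
have hzt a : (zz tau a <= t)%N by apply: dimvS; apply: subvf.
have e2 : (\sum_(a <- A') (t - zz tau a) + \sum_(a <- A') zz tau a = size A' * t)%N.
  rewrite -big_split /= (eq_bigr (fun=> t)) => [|a _]; last by rewrite subnK.
  by rewrite -sum1_size big_distrl /=; apply: eq_bigr => a _; rewrite mul1n.
have e3 : (\sum_(a <- A') (t - zz tau a) <= size D)%N.
  apply: (leq_trans _ hc); apply: leq_sum => a _; exact: hz.
have -> : (size A - 1 = size A')%N by rewrite sizeA' subn1.
rewrite mulnBr.
lia.
Qed.
End Lower.

Unset Implicit Arguments.
Theorem theorem3 (F0 : finFieldType) (L : fieldExtType F0)
    (A : seq L) (k s : nat) (astar : L) (W : {vspace L}) (ws : seq L)
    (beta : seq L) :
  let q := #|F0| in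
  let t := \dim {: L} in
  let n := size A in
  let r := (n - k)%N in
  uniq A ->
  (s < t)%N ->
  (q ^ s <= r)%N ->
  \dim W = s ->
  uniq ws ->
  (forall x, x \in ws <-> x \in W /\ x != 0) ->
  astar \in A ->
  basis_of {: L} beta ->
  let gs := [seq check_poly ws astar b | b <- beta] in
  (* the g_i are checks (degree <= r - 1) with full rank t at astar *)
  [/\ (forall g, g \in gs -> (size g <= r)%N),
      node_bw gs astar = t,
      (\sum_(a <- A | a != astar) node_bw gs a <= (n - 1) * (t - s))%N,
      (* they yield a linear repair scheme of bandwidth <= (n-1)(t-s) sub-symbols *)
      (exists (D : seq (L * 'Hom(L, F0^o))) (rho : 'Hom('rV[F0]_(size D), L)),
          lin_repair_scheme A k astar rho /\ (size D <= (n - 1) * (t - s))%N)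
    & (* optimality for full length n = q^t and r = q^s *)
      (n = q ^ t)%N -> r = (q ^ s)%N ->
      forall (D : seq (L * 'Hom(L, F0^o))) (rho : 'Hom('rV[F0]_(size D), L)),
        lin_repair_scheme A k astar rho -> ((n - 1) * (t - s) <= size D)%N].
Proof.
move=> q t n r Auniq slt hqr dimW wsu wsm astarA bb gs.
have Wsz := Ws_size wsu wsm.
have part1 : forall g, g \in gs -> (size g <= r)%N.
  move=> g /mapP [b _ ->]; rewrite /check_poly; apply: leq_trans (size_scale_leq _ _) _.
  by rewrite size_prod_XsubC -[(size ws).+1]/(size (0 :: ws)) Wsz dimW.
have part2 : node_bw gs astar = t.
  by rewrite /gs (node_bw_lim astar wsu wsm) // subrr (bw_astar wsu wsm).
have part3 : (\sum_(a <- A | a != astar) node_bw gs a <= (n - 1) * (t - s))%N.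
  apply: (@leq_trans (\sum_(a <- A | a != astar) (t - s))%N).
    apply: leq_sum => a aa; rewrite /gs (node_bw_lim astar wsu wsm) //.
    apply: leq_trans (bw_other wsu wsm _) _; first by rewrite subr_eq0.
    by rewrite dimW.
  by rewrite big_const_seq iter_addn_0 (count_neq Auniq astarA) mulnC subn1.
have kn : (k < n)%N.
  have : (0 < q ^ s)%N by rewrite expn_gt0 (ltnW (finNzRing_gt1 F0)).
  rewrite /r in hqr; lia.
split => //.
  have gsize : forall g, g \in gs -> (size g + k <= size A)%N.
    by move=> g /part1; rewrite /r /n; lia.
  have [D [rho [Hs Hsz]]] := scheme_exists Auniq astarA gsize part2.
  by exists D, rho; split => //; rewrite Hsz.
move=> hn hr D rho hs.
exact: (lower_bound Auniq astarA hn hr hs).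
Qed.
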